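(* For every Motzkin tree $T$, $\mathrm{ucs1}(T)$ holds if and only if $\mathrm{is\_ucs}(T)$ holds.
   Context: Motzkin trees are the terms generated by a leaf $v$, a unary constructor $l$ and a binary constructor $a$. $\mathrm{ucs1}(T)$ holds iff, for every leaf of $T$, the number of unary nodes on the path from the root of $T$ to that leaf (counted starting from $0$) equals $1$. For a Boolean $b$, the predicate $\mathrm{is\_ucs\_aux}(T,b)$ is defined recursively with a Boolean flag recording whether a unary node has already been met: - $\mathrm{is\_ucs\_aux}(v,b)$ iff $b$ is true; - $\mathrm{is\_ucs\_aux}(l(T),b)$ iff $b$ is false and $\mathrm{is\_ucs\_aux}(T,\mathrm{true})$; - $\mathrm{is\_ucs\_aux}(a(T_1,T_2),b)$ iff $\mathrm{is\_ucs\_aux}(T_1,b)$ and $\mathrm{is\_ucs\_aux}(T_2,b)$. Finally, $\mathrm{is\_ucs}(T) := \mathrm{is\_ucs\_aux}(T,\mathrm{false})$. *)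

(* Defs.v *)
From Stdlib Require Import Arith List.

Inductive motzkin : Type :=
| v : motzkin
| l : motzkin -> motzkin
| a : motzkin -> motzkin -> motzkin.

Inductive leaf_ucount : motzkin -> nat -> Prop :=
| lu_v : leaf_ucount v 0
| lu_l : forall T n, leaf_ucount T n -> leaf_ucount (l T) (S n)
| lu_a1 : forall T1 T2 n, leaf_ucount T1 n -> leaf_ucount (a T1 T2) n
| lu_a2 : forall T1 T2 n, leaf_ucount T2 n -> leaf_ucount (a T1 T2) n.

Definition ucs1 (T : motzkin) : Prop :=
  forall n, leaf_ucount T n -> n = 1.

Fixpoint is_ucs_aux (T : motzkin) (b : bool) : Prop :=
  match T with
  | v => b = true
  | l T' => b = false /\ is_ucs_aux T' true
  | a T1 T2 => is_ucs_aux T1 b /\ is_ucs_aux T2 b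
  end.

Definition is_ucs (T : motzkin) : Prop := is_ucs_aux T false.

(* Main.v *)
Require Import Defs.
From Stdlib Require Import Arith Lia.

Lemma has_leaf : forall T, exists n, leaf_ucount T n.
Proof.
  induction T as [| T [n H] | T1 [n H] T2 _].
  - exists 0; constructor.
  - exists (S n); constructor; auto.
  - exists n; apply lu_a1; auto.
Qed.

Lemma gen : forall T b, is_ucs_aux T b <->
  (forall n, leaf_ucount T n -> n + (if b then 1 else 0) = 1).
Proof.
  induction T as [| T IH | T1 IH1 T2 IH2]; intros b; simpl; split.
  - intros -> n H; inversion H; reflexivity.
  - intros H. specialize (H 0 lu_v). destruct b; simpl in *; congruence.
  - intros [-> H] n Hn. inversion Hn; subst.
    pose proof (proj1 (IH true) H _ H1). simpl in *. lia.
  - intros H. destruct (has_leaf T) as [m Hm].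
    assert (Hb := H _ (lu_l _ _ Hm)).
    destruct b; simpl in Hb; [lia|]. split; [reflexivity|].
    apply IH. intros n Hn. specialize (H _ (lu_l _ _ Hn)). lia.
  - intros [H1 H2] n Hn. inversion Hn; subst.
    + apply (proj1 (IH1 b)); auto.
    + apply (proj1 (IH2 b)); auto.
  - intros H. split.
    + apply IH1. intros n Hn. apply H. apply lu_a1; auto.
    + apply IH2. intros n Hn. apply H. apply lu_a2; auto.
Qed.

Theorem mainTheorem6 : forall T : motzkin, ucs1 T <-> is_ucs T.
Proof.
  intros T. unfold ucs1, is_ucs. rewrite gen. split; intros H n Hn.
  - specialize (H n Hn). lia.
  - specialize (H n Hn). lia.
Qed.
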